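(* Every semi-arc visibility graph is planar.
   Context: An arc visibility representation is a finite collection of pairwise disjoint circular arcs, all concentric (centered at a common point $O$). A line of sight is a radial line segment, i.e. a segment contained in a line through $O$ (it may pass through $O$). The arc visibility graph has one vertex per arc, with two vertices adjacent when the two corresponding arcs are joined by a line of sight (having its endpoints on the two arcs) that intersects no other arc. A semi-arc visibility representation is an arc visibility representation in which every arc starts on one common radial ray from $O$ and extends counterclockwise from it; the corresponding graph is a semi-arc visibility graph. *)

(* Defs.v *)
From Stdlib Require Import Reals.
Open Scope R_scope.

Definition semi_arc (r th : R) (p : R * R) : Prop :=
  exists t, 0 <= t <= th /\ p = (r * cos t, r * sin t).

Definition semi_arc_rep (n : nat) (r th : nat -> R) : Prop :=
  (forall i, (i < n)%nat -> 0 < r i /\ 0 < th i < 2 * PI) /\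
  (forall i j, (i < n)%nat -> (j < n)%nat -> i <> j ->
     forall p, semi_arc (r i) (th i) p -> ~ semi_arc (r j) (th j) p).

Definition segment (p q x : R * R) : Prop :=
  exists s, 0 <= s <= 1 /\
    x = (fst p + s * (fst q - fst p), snd p + s * (snd q - snd p)).

Definition radial (p q : R * R) : Prop :=
  fst p * snd q - snd p * fst q = 0.

Definition sav_adj (n : nat) (r th : nat -> R) (i j : nat) : Prop :=
  i <> j /\
  exists p q, semi_arc (r i) (th i) p /\ semi_arc (r j) (th j) q /\
    radial p q /\
    forall k, (k < n)%nat -> k <> i -> k <> j ->
      forall x, segment p q x -> ~ semi_arc (r k) (th k) x.

Definition planar (n : nat) (adj : nat -> nat -> Prop) : Prop :=
  exists (pos : nat -> R * R) (gam : nat -> nat -> R -> R * R),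
    (forall i j, (i < n)%nat -> (j < n)%nat -> pos i = pos j -> i = j) /\
    (forall i j, (i < j)%nat -> (j < n)%nat -> adj i j ->
       continuity (fun t => fst (gam i j t)) /\
       continuity (fun t => snd (gam i j t)) /\
       gam i j 0 = pos i /\ gam i j 1 = pos j /\
       (forall s t, 0 <= s <= 1 -> 0 <= t <= 1 -> gam i j s = gam i j t -> s = t) /\
       (forall k t, (k < n)%nat -> 0 < t < 1 -> gam i j t <> pos k) /\
       (forall k l, (k < l)%nat -> (l < n)%nat -> adj k l -> (i, j) <> (k, l) ->
          forall s t, 0 < s < 1 -> 0 < t < 1 -> gam i j s <> gam k l t)).

(* Main.v *)
Require Import Defs.
From Stdlib Require Import Reals Lra Lia Psatz ZArith ClassicalEpsilon.
Open Scope R_scope.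


Definition cl (z : R) : R := (Rabs z - Rabs (z - 1) + 1) / 2.

Lemma cl_0 z : z <= 0 -> cl z = 0.
Proof. intro H; unfold cl; rewrite (Rabs_left1 z), (Rabs_left1 (z-1)); lra. Qed.
Lemma cl_1 z : 1 <= z -> cl z = 1.
Proof. intro H; unfold cl; rewrite (Rabs_right z), (Rabs_right (z-1)); lra. Qed.
Lemma cl_id z : 0 <= z <= 1 -> cl z = z.
Proof. intro H; unfold cl; rewrite (Rabs_right z), (Rabs_left1 (z-1)); lra. Qed.

Lemma cont_cl_aff (a b c : R) : continuity (fun t => c * cl (a * t + b)).
Proof.
  unfold cl.
  apply continuity_mult. { apply continuity_const; intros ? ?; reflexivity. }
  set (g := fun t => a * t + b).
  assert (Hg : continuity g).
  { unfold g. apply continuity_plus.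
    - apply continuity_mult. apply continuity_const; intros ? ?; reflexivity.
      apply derivable_continuous, derivable_id.
    - apply continuity_const; intros ? ?; reflexivity. }
  assert (H1 : continuity (fun t => Rabs (g t))).
  { apply (continuity_comp g Rabs); [exact Hg | exact Rcontinuity_abs]. }
  assert (H2 : continuity (fun t => Rabs (g t - 1))).
  { apply (continuity_comp (fun t => g t - 1) Rabs); [|exact Rcontinuity_abs].
    apply continuity_minus; [exact Hg|]. apply continuity_const; intros ? ?; reflexivity. }
  intros x. unfold continuity_pt, continue_in, limit1_in, limit_in in *.
  intros eps Heps. destruct (H1 x eps Heps) as [d1 [Hd1 P1]].
  destruct (H2 x eps Heps) as [d2 [Hd2 P2]].
  exists (Rmin d1 d2). split. apply Rmin_pos; lra.
  intros y [Hy Hdy]. simpl in *. unfold R_dist in *.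
  assert (A1 := P1 y (conj Hy (Rlt_le_trans _ _ _ Hdy (Rmin_l _ _)))).
  assert (A2 := P2 y (conj Hy (Rlt_le_trans _ _ _ Hdy (Rmin_r _ _)))).
  unfold g in *.
  revert A1 A2.
  set (u1 := Rabs (a*y+b)). set (u2 := Rabs (a*x+b)).
  set (w1 := Rabs (a*y+b-1)). set (w2 := Rabs (a*x+b-1)).
  intros A1 A2.
  apply Rabs_def2 in A1; apply Rabs_def2 in A2.
  apply Rabs_def1; lra.
Qed.


Definition comp5 (a0 a1 a2 a3 a4 a5 t : R) : R :=
  a0 + (a1 - a0) * cl (5 * t + 0) + (a2 - a1) * cl (5 * t + -1)
     + (a3 - a2) * cl (5 * t + -2) + (a4 - a3) * cl (5 * t + -3)
     + (a5 - a4) * cl (5 * t + -4).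

Definition poly5 (p0 p1 p2 p3 p4 p5 : R * R) (t : R) : R * R :=
  (comp5 (fst p0) (fst p1) (fst p2) (fst p3) (fst p4) (fst p5) t,
   comp5 (snd p0) (snd p1) (snd p2) (snd p3) (snd p4) (snd p5) t).

Lemma comp5_cont a0 a1 a2 a3 a4 a5 : continuity (comp5 a0 a1 a2 a3 a4 a5).
Proof.
  unfold comp5.
  repeat apply continuity_plus;
  try (apply continuity_const; intros ? ?; reflexivity);
  apply cont_cl_aff.
Qed.

Lemma comp5_r1 a0 a1 a2 a3 a4 a5 t : 0 <= t <= 1/5 -> comp5 a0 a1 a2 a3 a4 a5 t = a0 + (a1 - a0) * (5*t).
Proof. intro; unfold comp5;
    rewrite (cl_id (5*t+0)), (cl_0 (5*t+ -1)), (cl_0 (5*t+ -2)), (cl_0 (5*t+ -3)), (cl_0 (5*t+ -4)); lra. Qed.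
Lemma comp5_r2 a0 a1 a2 a3 a4 a5 t : 1/5 <= t <= 2/5 -> comp5 a0 a1 a2 a3 a4 a5 t = a1 + (a2 - a1) * (5*t-1).
Proof. intro; unfold comp5;
    rewrite (cl_1 (5*t+0)), (cl_id (5*t+ -1)), (cl_0 (5*t+ -2)), (cl_0 (5*t+ -3)), (cl_0 (5*t+ -4)); lra. Qed.
Lemma comp5_r3 a0 a1 a2 a3 a4 a5 t : 2/5 <= t <= 3/5 -> comp5 a0 a1 a2 a3 a4 a5 t = a2 + (a3 - a2) * (5*t-2).
Proof. intro; unfold comp5;
    rewrite (cl_1 (5*t+0)), (cl_1 (5*t+ -1)), (cl_id (5*t+ -2)), (cl_0 (5*t+ -3)), (cl_0 (5*t+ -4)); lra. Qed.
Lemma comp5_r4 a0 a1 a2 a3 a4 a5 t : 3/5 <= t <= 4/5 -> comp5 a0 a1 a2 a3 a4 a5 t = a3 + (a4 - a3) * (5*t-3).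
Proof. intro; unfold comp5;
    rewrite (cl_1 (5*t+0)), (cl_1 (5*t+ -1)), (cl_1 (5*t+ -2)), (cl_id (5*t+ -3)), (cl_0 (5*t+ -4)); lra. Qed.
Lemma comp5_r5 a0 a1 a2 a3 a4 a5 t : 4/5 <= t <= 1 -> comp5 a0 a1 a2 a3 a4 a5 t = a4 + (a5 - a4) * (5*t-4).
Proof. intro; unfold comp5;
    rewrite (cl_1 (5*t+0)), (cl_1 (5*t+ -1)), (cl_1 (5*t+ -2)), (cl_1 (5*t+ -3)), (cl_id (5*t+ -4)); lra. Qed.

Lemma comp5_0 a0 a1 a2 a3 a4 a5 : comp5 a0 a1 a2 a3 a4 a5 0 = a0.
Proof. unfold comp5. rewrite !cl_0; lra. Qed.
Lemma comp5_1 a0 a1 a2 a3 a4 a5 : comp5 a0 a1 a2 a3 a4 a5 1 = a5.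
Proof. unfold comp5. rewrite !cl_1; lra. Qed.

Lemma poly5_piece p0 p1 p2 p3 p4 p5 t : 0 <= t <= 1 ->
  exists l, 0 <= l <= 1 /\
  ((t = l / 5 /\ poly5 p0 p1 p2 p3 p4 p5 t = (fst p0 + (fst p1 - fst p0) * l, snd p0 + (snd p1 - snd p0) * l)) \/
   (t = (1 + l) / 5 /\ poly5 p0 p1 p2 p3 p4 p5 t = (fst p1 + (fst p2 - fst p1) * l, snd p1 + (snd p2 - snd p1) * l)) \/
   (t = (2 + l) / 5 /\ poly5 p0 p1 p2 p3 p4 p5 t = (fst p2 + (fst p3 - fst p2) * l, snd p2 + (snd p3 - snd p2) * l)) \/
   (t = (3 + l) / 5 /\ poly5 p0 p1 p2 p3 p4 p5 t = (fst p3 + (fst p4 - fst p3) * l, snd p3 + (snd p4 - snd p3) * l)) \/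
   (t = (4 + l) / 5 /\ poly5 p0 p1 p2 p3 p4 p5 t = (fst p4 + (fst p5 - fst p4) * l, snd p4 + (snd p5 - snd p4) * l))).
Proof.
  intro Ht. unfold poly5.
  destruct (Rle_lt_dec t (1/5)).
  { exists (5*t). split. lra. left. split. lra. rewrite !comp5_r1 by lra. reflexivity. }
  destruct (Rle_lt_dec t (2/5)).
  { exists (5*t-1). split. lra. right; left. split. lra. rewrite !comp5_r2 by lra. reflexivity. }
  destruct (Rle_lt_dec t (3/5)).
  { exists (5*t-2). split. lra. right; right; left. split. lra. rewrite !comp5_r3 by lra. reflexivity. }
  destruct (Rle_lt_dec t (4/5)).
  { exists (5*t-3). split. lra. right; right; right; left. split. lra. rewrite !comp5_r4 by lra. reflexivity. }
  { exists (5*t-4). split. lra. right; right; right; right. split. lra. rewrite !comp5_r5 by lra. reflexivity. }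
Qed.


Definition chord (ux ax uy ay e s B T : R) : R -> R * R :=
  poly5 (ux, ax) (ux + e, -s) (B + s, -s) (B + s, T + s) (uy + e, T + s) (uy, ay).

Definition CH (ux ax uy ay e s B T : R) : Prop :=
  0 < e /\ e < 1 /\ ux + e < uy /\ uy < B /\ 1 <= s /\ 0 < ax /\ ax < ay /\ ay < T.

Definition Cin (ux ax uy ay e s B T : R) (z : R * R) : Prop :=
  (exists l, 0 < l <= 1 /\ z = (ux + l * e, ax - l * (ax + s))) \/
  (snd z = -s /\ ux + e <= fst z <= B + s) \/
  (fst z = B + s /\ -s <= snd z <= T + s) \/
  (snd z = T + s /\ uy + e <= fst z <= B + s) \/
  (exists l, 0 < l <= 1 /\ z = (uy + l * e, ay + l * (T + s - ay))).

Lemma chord_0 ux ax uy ay e s B T : chord ux ax uy ay e s B T 0 = (ux, ax).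
Proof. unfold chord, poly5; simpl; rewrite !comp5_0; reflexivity. Qed.
Lemma chord_1 ux ax uy ay e s B T : chord ux ax uy ay e s B T 1 = (uy, ay).
Proof. unfold chord, poly5; simpl; rewrite !comp5_1; reflexivity. Qed.

Lemma chord_interior ux ax uy ay e s B T t :
  CH ux ax uy ay e s B T -> 0 < t < 1 -> Cin ux ax uy ay e s B T (chord ux ax uy ay e s B T t).
Proof.
  intros [He [He1 [Hxy [HyB [Hs [Hax [Haxy HaT]]]]]]] Ht.
  unfold chord, Cin.
  destruct (poly5_piece (ux, ax) (ux + e, -s) (B + s, -s) (B + s, T + s) (uy + e, T + s) (uy, ay) t)
    as [l [Hl [[E P]|[[E P]|[[E P]|[[E P]|[E P]]]]]]]; [lra| | | | |]; rewrite P; simpl.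
  - left. exists l. split. lra. f_equal; ring.
  - right; left. split. ring. nra.
  - right; right; left. split. ring. nra.
  - right; right; right; left. split. ring. nra.
  - right; right; right; right. exists (1 - l). split. lra. f_equal; ring.
Qed.

Lemma chord_inj ux ax uy ay e s B T t1 t2 :
  CH ux ax uy ay e s B T -> 0 <= t1 <= 1 -> 0 <= t2 <= 1 ->
  chord ux ax uy ay e s B T t1 = chord ux ax uy ay e s B T t2 -> t1 = t2.
Proof.
  intros [He [He1 [Hxy [HyB [Hs [Hax [Haxy HaT]]]]]]] H1 H2.
  unfold chord.
  destruct (poly5_piece (ux, ax) (ux + e, -s) (B + s, -s) (B + s, T + s) (uy + e, T + s) (uy, ay) t1)
    as [l [Hl [[E P]|[[E P]|[[E P]|[[E P]|[E P]]]]]]]; [lra| | | | |]; rewrite P; clear P;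
  destruct (poly5_piece (ux, ax) (ux + e, -s) (B + s, -s) (B + s, T + s) (uy + e, T + s) (uy, ay) t2)
    as [m [Hm [[E' P]|[[E' P]|[[E' P]|[[E' P]|[E' P]]]]]]]; try lra; rewrite P; clear P;
  simpl; intro Q; injection Q; clear Q; intros Q2 Q1; subst t1 t2;
  try nra.
Qed.


Definition sep (g u a u' a' : R) : Prop := (u = u' /\ a = a') \/ u + g <= u' \/ u' + g <= u.

Lemma chord_chord ux ax uy ay e s vx bx vy by' f s' B T g z :
  CH ux ax uy ay e s B T -> CH vx bx vy by' f s' B T ->
  s' < s -> e < f -> f < g -> ux <= vx -> uy <= vy ->
  ux + g <= uy -> vx + g <= vy ->
  sep g ux ax vx bx -> sep g uy ay vy by' -> sep g uy ay vx bx ->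
  Cin ux ax uy ay e s B T z -> Cin vx bx vy by' f s' B T z -> False.
Proof.
  intros [He [He1 [Hxy [HyB [Hs [Hax [Haxy HaT]]]]]]]
         [Hf [Hf1 [Hvxy [HvyB [Hs' [Hbx [Hbxy HbT]]]]]]] Hss Hef Hfg Hx Hy Hgx Hgy S1 S2 S3.
  intros [[l [Hl E]]|[[E1 E2]|[[E1 E2]|[[E1 E2]|[l [Hl E]]]]]];
  intros [[m [Hm E']]|[[E1' E2']|[[E1' E2']|[[E1' E2']|[m [Hm E']]]]]];
  try subst z; simpl in *;
  try (injection E'; clear E'; intros); try (injection E; clear E; intros);
  destruct S1 as [[S1a S1b]|S1]; destruct S2 as [[S2a S2b]|S2]; destruct S3 as [[S3a S3b]|S3];
  try subst; try lra; try nra; try (assert (m < l) by nra; nra).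
Qed.


Definition Sin (u1 a1 u2 a2 : R) (z : R * R) : Prop :=
  exists m, 0 < m < 1 /\ z = (u1 + m * (u2 - u1), a1 + m * (a2 - a1)).

Lemma below_line u1 a1 u2 a2 u a :
  u1 < u < u2 -> a < a1 -> a < a2 -> (a - a1) * (u2 - u1) < (u - u1) * (a2 - a1).
Proof. intros. nra. Qed.

Lemma nest u1 a1 u2 a2 u3 a3 u4 a4 z :
  u1 <= u3 -> u3 < u4 -> u4 <= u2 ->
  ((u3 = u1 /\ a3 = a1) \/ (u1 < u3 /\ a3 < a1 /\ a3 < a2)) ->
  ((u4 = u2 /\ a4 = a2) \/ (u4 < u2 /\ a4 < a1 /\ a4 < a2)) ->
  ~ (u3 = u1 /\ u4 = u2) ->
  Sin u1 a1 u2 a2 z -> Sin u3 a3 u4 a4 z -> False.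
Proof.
  intros H13 H34 H42 C3 C4 Hn [m [Hm E]] [k [Hk E']].
  rewrite E in E'. injection E'; clear E'; intros Ea Eu.
  assert (D : 0 < u2 - u1) by lra.
  assert (L3 : (a3 - a1) * (u2 - u1) <= (u3 - u1) * (a2 - a1)).
  { destruct C3 as [[-> ->]|[? [? ?]]]. nra. apply Rlt_le, below_line; lra. }
  assert (L4 : (a4 - a1) * (u2 - u1) <= (u4 - u1) * (a2 - a1)).
  { destruct C4 as [[-> ->]|[? [? ?]]]. nra. apply Rlt_le, below_line; lra. }
  assert (S : (a3 - a1) * (u2 - u1) < (u3 - u1) * (a2 - a1) \/
              (a4 - a1) * (u2 - u1) < (u4 - u1) * (a2 - a1)).
  { destruct C3 as [[? ?]|[? [? ?]]]; destruct C4 as [[? ?]|[? [? ?]]].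
    - exfalso; tauto.
    - right; apply below_line; lra.
    - left; apply below_line; lra.
    - left; apply below_line; lra. }
  assert (K : (a3 + k * (a4 - a3) - a1) * (u2 - u1) < (u3 + k * (u4 - u3) - u1) * (a2 - a1)).
  { destruct S as [S|S]; nra. }
  rewrite <- Ea, <- Eu in K. nra.
Qed.

Lemma seg_range u1 u2 m : u1 < u2 -> 0 < m < 1 -> u1 < u1 + m * (u2 - u1) < u2.
Proof. intros. nra. Qed.

Lemma seg_seg u1 a1 u2 a2 u3 a3 u4 a4 z :
  u1 < u2 -> u3 < u4 ->
  (u1 = u3 -> a1 = a3) -> (u1 = u4 -> a1 = a4) -> (u2 = u3 -> a2 = a3) -> (u2 = u4 -> a2 = a4) ->
  (u1 < u3 < u2 -> a3 < a1 /\ a3 < a2) -> (u1 < u4 < u2 -> a4 < a1 /\ a4 < a2) ->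
  (u3 < u1 < u4 -> a1 < a3 /\ a1 < a4) -> (u3 < u2 < u4 -> a2 < a3 /\ a2 < a4) ->
  ~ (u1 = u3 /\ u2 = u4) ->
  Sin u1 a1 u2 a2 z -> Sin u3 a3 u4 a4 z -> False.
Proof.
  intros H12 H34 E13 E14 E23 E24 V3 V4 V1 V2 Hn Z1 Z2.
  assert (R1 : u1 < fst z < u2). { destruct Z1 as [m [Hm ->]]; simpl; apply seg_range; auto. }
  assert (R2 : u3 < fst z < u4). { destruct Z2 as [m [Hm ->]]; simpl; apply seg_range; auto. }
  destruct (Rle_lt_dec u1 u3) as [Hle|Hlt].
  - destruct (Rle_lt_dec u4 u2).
    + apply (nest u1 a1 u2 a2 u3 a3 u4 a4 z); try lra; auto.
    + destruct (Req_dec u1 u3) as [<-|].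
      * apply (nest u1 a3 u4 a4 u1 a1 u2 a2 z); try lra; auto.
      * exfalso. destruct (V2 ltac:(lra)). destruct (V3 ltac:(lra)). lra.
  - destruct (Rle_lt_dec u2 u4).
    + apply (nest u3 a3 u4 a4 u1 a1 u2 a2 z); try lra; auto.
    + exfalso. destruct (V1 ltac:(lra)). destruct (V4 ltac:(lra)). lra.
Qed.


Lemma seg_chord uk ak um am ux ax uy ay e s B T g z :
  uk < um -> 0 < ak < T -> 0 < am < T -> um < B ->
  CH ux ax uy ay e s B T -> e < g ->
  sep g uk ak ux ax -> sep g um am ux ax -> sep g uk ak uy ay -> sep g um am uy ay ->
  ~ (uk < ux < um) -> ~ (uk < uy < um) ->
  Sin uk ak um am z -> Cin ux ax uy ay e s B T z -> False.
Proof.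
  intros Hkm Hak Ham HmB [He [He1 [Hxy [HyB [Hs [Hax [Haxy HaT]]]]]]] Heg S1 S2 S3 S4 N1 N2
    [mu [Hmu E]].
  subst z.
  intros [[l [Hl E]]|[[E1 E2]|[[E1 E2]|[[E1 E2]|[l [Hl E]]]]]]; simpl in *;
  try (injection E; clear E; intros);
  destruct S1 as [[S1a S1b]|S1]; destruct S2 as [[S2a S2b]|S2];
  destruct S3 as [[S3a S3b]|S3]; destruct S4 as [[S4a S4b]|S4];
  try subst; try lra; try nra;
  (assert (mu < l) by nra; nra).
Qed.


Lemma chord_vertex ux ax uy ay e s B T g uk ak :
  CH ux ax uy ay e s B T -> e < g -> 0 < ak < T -> uk < B ->
  sep g uk ak ux ax -> sep g uk ak uy ay ->
  Cin ux ax uy ay e s B T (uk, ak) -> False.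
Proof.
  intros [He [He1 [Hxy [HyB [Hs [Hax [Haxy HaT]]]]]]] Heg Hak HkB S1 S2.
  intros [[l [Hl E]]|[[E1 E2]|[[E1 E2]|[[E1 E2]|[l [Hl E]]]]]]; simpl in *;
  try (injection E; clear E; intros);
  destruct S1 as [[S1a S1b]|S1]; destruct S2 as [[S2a S2b]|S2]; try subst; try nra.
Qed.

Lemma seg_vertex u1 a1 u2 a2 uk ak :
  u1 < u2 -> (uk = u1 -> ak = a1) -> (uk = u2 -> ak = a2) ->
  (u1 < uk < u2 -> ak < a1 /\ ak < a2) ->
  Sin u1 a1 u2 a2 (uk, ak) -> False.
Proof.
  intros H12 E1 E2 V [m [Hm E]]. injection E; clear E; intros Ea Eu.
  destruct (Req_dec uk u1). subst; nra.
  destruct (Req_dec uk u2). subst; nra.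
  destruct (V ltac:(nra)). nra.
Qed.

Lemma sin_zero_cases d : sin d = 0 -> -(2*PI) < d < 2*PI -> d = 0 \/ d = PI \/ d = - PI.
Proof.
  intros H Hd. destruct (sin_eq_0_0 d H) as [k ->].
  assert (P := PI_RGT_0).
  assert (-2 < IZR k < 2) by nra.
  destruct H0 as [H1 H2]. apply lt_IZR in H1, H2.
  assert (k = 0 \/ k = 1 \/ k = -1)%Z as [E|[E|E]] by lia; subst k; simpl; lra.
Qed.

Lemma on_arc r0 th0 t : 0 <= t <= th0 -> semi_arc r0 th0 (r0 * cos t, r0 * sin t).
Proof. intros H. exists t. split; auto. Qed.

Lemma seg_sym p q x : segment p q x -> segment q p x.
Proof.
  intros [s [Hs E]]. exists (1 - s). split. lra. rewrite E. f_equal; ring.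
Qed.

Lemma Rdiv_le_0_compat a b : 0 <= a -> 0 < b -> 0 <= a / b.
Proof. intros; unfold Rdiv; apply Rmult_le_pos; [lra| left; apply Rinv_0_lt_compat; lra]. Qed.

Lemma seg_same ri rj rk t :
  ri <> rj -> (ri <= rk <= rj \/ rj <= rk <= ri) ->
  segment (ri * cos t, ri * sin t) (rj * cos t, rj * sin t) (rk * cos t, rk * sin t).
Proof.
  intros Hne Hb. exists ((rk - ri) / (rj - ri)). split.
  - assert (rj - ri <> 0) by lra.
    destruct Hb as [Hb|Hb].
    + assert (0 < rj - ri) by lra. split.
      apply Rdiv_le_0_compat; lra.
      apply (Rmult_le_reg_r (rj - ri)); [lra|]. field_simplify; lra.
    + assert (rj - ri < 0) by lra. split.
      * replace ((rk - ri) / (rj - ri)) with ((ri - rk) / (ri - rj)) by (field; lra).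
        apply Rdiv_le_0_compat; lra.
      * replace ((rk - ri) / (rj - ri)) with ((ri - rk) / (ri - rj)) by (field; lra).
        apply (Rmult_le_reg_r (ri - rj)); [lra|]. field_simplify; lra.
  - simpl. f_equal; field; lra.
Qed.

Lemma seg_opp1 rx ry rk t :
  0 < rx -> 0 < ry -> 0 <= rk <= rx ->
  segment (rx * cos t, rx * sin t) (ry * cos (t + PI), ry * sin (t + PI)) (rk * cos t, rk * sin t).
Proof.
  intros Hx Hy Hk. rewrite neg_cos, neg_sin.
  exists ((rx - rk) / (rx + ry)). split.
  - split. apply Rdiv_le_0_compat; lra.
    apply (Rmult_le_reg_r (rx + ry)); [lra|]. field_simplify; lra.
  - simpl. f_equal; field; lra.
Qed.

Lemma seg_opp2 rx ry rk t :
  0 < rx -> 0 < ry -> 0 <= rk <= ry ->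
  segment (rx * cos t, rx * sin t) (ry * cos (t + PI), ry * sin (t + PI)) (rk * cos (t + PI), rk * sin (t + PI)).
Proof.
  intros Hx Hy Hk. rewrite !neg_cos, !neg_sin.
  exists ((rx + rk) / (rx + ry)). split.
  - split. apply Rdiv_le_0_compat; lra.
    apply (Rmult_le_reg_r (rx + ry)); [lra|]. field_simplify; lra.
  - simpl. f_equal; field; lra.
Qed.


Definition Hrel (n : nat) (r th : nat -> R) (i j : nat) : Prop :=
  forall k, (k < n)%nat -> (r i < r k < r j \/ r j < r k < r i) -> th k < th i /\ th k < th j.

Definition Chord (n : nat) (r th : nat -> R) (x y : nat) : Prop :=
  r x < r y /\ exists t, 0 <= t /\ t <= th x /\ t + PI <= th y /\ th x < t + PI /\
    forall k, (k < n)%nat -> k <> x -> k <> y ->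
      (r k < r x -> th k < t) /\ (r k < r y -> th k < t + PI).

Lemma Hrel_sym n r th i j : Hrel n r th i j -> Hrel n r th j i.
Proof. intros H k Hk Hb. destruct (H k Hk) as [? ?]; [tauto|]. split; auto. Qed.

Lemma rinj n r th i j : semi_arc_rep n r th -> (i < n)%nat -> (j < n)%nat -> i <> j -> r i <> r j.
Proof.
  intros [H1 H2] Hi Hj Hij E.
  destruct (H1 i Hi) as [? [? ?]].
  apply (H2 i j Hi Hj Hij (r i * cos 0, r i * sin 0)).
  - apply on_arc; lra.
  - rewrite E. apply on_arc. destruct (H1 j Hj); lra.
Qed.

Lemma opp_case n r th x y t : semi_arc_rep n r th -> (x < n)%nat -> (y < n)%nat -> x <> y ->
  0 <= t <= th x -> t + PI <= th y ->
  (forall k, (k < n)%nat -> k <> x -> k <> y -> forall w,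
     segment (r x * cos t, r x * sin t) (r y * cos (t + PI), r y * sin (t + PI)) w ->
     ~ semi_arc (r k) (th k) w) ->
  Hrel n r th x y \/ Chord n r th x y.
Proof.
  intros Hrep Hx Hy Hxy Ht Hty Hblk.
  destruct Hrep as [Hpos Hdis].
  destruct (Hpos x Hx) as [rx0 _]. destruct (Hpos y Hy) as [ry0 _].
  assert (F1 : forall k, (k < n)%nat -> k <> x -> k <> y -> r k < r x -> th k < t).
  { intros k Hk Hkx Hky Hr. destruct (Rlt_or_le (th k) t) as [|Hge]; auto. exfalso.
    destruct (Hpos k Hk) as [rk0 _].
    apply (Hblk k Hk Hkx Hky (r k * cos t, r k * sin t)).
    - apply seg_opp1; lra.
    - apply on_arc; lra. }
  assert (F2 : forall k, (k < n)%nat -> k <> x -> k <> y -> r k < r y -> th k < t + PI).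
  { intros k Hk Hkx Hky Hr. destruct (Rlt_or_le (th k) (t + PI)) as [|Hge]; auto. exfalso.
    destruct (Hpos k Hk) as [rk0 _].
    apply (Hblk k Hk Hkx Hky (r k * cos (t + PI), r k * sin (t + PI))).
    - apply seg_opp2; lra.
    - apply on_arc. assert (P := PI_RGT_0). lra. }
  assert (P := PI_RGT_0).
  assert (Hne : r x <> r y) by (apply (rinj n r th x y); auto; split; auto).
  assert (NE : forall k, r k <> r x -> k <> x) by (intros k H E; subst; auto).
  assert (NE' : forall k, r k <> r y -> k <> y) by (intros k H E; subst; auto).
  destruct (Rlt_or_le (r y) (r x)) as [Hyx|Hxy'].
  - left. intros k Hk Hb. destruct Hb as [Hb|Hb]; [lra|].
    assert (th k < t) by (apply F1; auto; try (apply NE; lra); try (apply NE'; lra); lra). lra.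
  - destruct (Rlt_or_le (th x) (t + PI)) as [Hthx|Hthx].
    + right. split; [lra|]. exists t. repeat split; try lra.
      * intros; apply F1; auto.
      * intros; apply F2; auto.
    + left. intros k Hk Hb. destruct Hb as [Hb|Hb]; [|lra].
      assert (th k < t + PI) by (apply F2; auto; try (apply NE; lra); try (apply NE'; lra); lra). lra.
Qed.

Lemma adj_cases n r th i j : semi_arc_rep n r th -> (i < n)%nat -> (j < n)%nat ->
  sav_adj n r th i j -> Hrel n r th i j \/ Chord n r th i j \/ Chord n r th j i.
Proof.
  intros Hrep Hi Hj [Hij [p [q [[t1 [Ht1 ->]] [[t2 [Ht2 ->]] [Hrad Hblk]]]]]].
  pose proof Hrep as [Hpos Hdis].
  destruct (Hpos i Hi) as [ri0 Hthi]. destruct (Hpos j Hj) as [rj0 Hthj].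
  assert (Hs : sin (t2 - t1) = 0).
  { unfold radial in Hrad; simpl in Hrad. rewrite sin_minus.
    assert (r i * r j * (sin t2 * cos t1 - cos t2 * sin t1) = 0) by (rewrite <- Hrad; ring).
    apply Rmult_integral in H. destruct H as [H|H]; auto.
    exfalso. apply Rmult_integral in H. destruct H; lra. }
  assert (Hne : r i <> r j) by (apply (rinj n r th i j); auto).
  destruct (sin_zero_cases (t2 - t1) Hs) as [E|[E|E]]; [lra| | |].
  - left. assert (t2 = t1) by lra. subst t2.
    intros k Hk Hb.
    assert (Hki : k <> i) by (intro; subst; lra).
    assert (Hkj : k <> j) by (intro; subst; lra).
    destruct (Hpos k Hk) as [rk0 _].
    destruct (Rlt_or_le (th k) t1) as [|Hge]; [lra|]. exfalso.
    apply (Hblk k Hk Hki Hkj (r k * cos t1, r k * sin t1)).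
    + apply seg_same; auto. lra.
    + apply on_arc; lra.
  - assert (t2 = t1 + PI) by lra. subst t2.
    destruct (opp_case n r th i j t1 Hrep Hi Hj Hij) as [H|H]; auto; lra.
  - assert (t1 = t2 + PI) by lra. subst t1.
    destruct (opp_case n r th j i t2 Hrep Hj Hi (not_eq_sym Hij)) as [H|H]; try lra.
    + intros k Hk Hkj Hki w Hw. apply (Hblk k Hk Hki Hkj w). apply seg_sym. exact Hw.
    + left. apply Hrel_sym; auto.
    + right; right; auto.
Qed.


Definition Rec (n : nat) (r th : nat -> R) (v : nat) : Prop :=
  forall k, (k < n)%nat -> r k < r v -> th k < th v.

Lemma chord_rx n r th x y : Chord n r th x y -> Rec n r th x.
Proof.
  intros [Hxy [t [H0 [H1 [H2 [H3 H4]]]]]] k Hk Hr.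
  assert (k <> x) by (intro; subst; lra). assert (k <> y) by (intro; subst; lra).
  destruct (H4 k Hk) as [A _]; auto. specialize (A Hr). lra.
Qed.

Lemma chord_ry n r th x y : Chord n r th x y -> Rec n r th y.
Proof.
  intros [Hxy [t [H0 [H1 [H2 [H3 H4]]]]]] k Hk Hr.
  assert (k <> y) by (intro; subst; lra).
  destruct (Nat.eq_dec k x) as [->|Hkx]. lra.
  destruct (H4 k Hk) as [_ A]; auto. specialize (A Hr). lra.
Qed.

Lemma chord_th n r th x y : Chord n r th x y -> th x < th y.
Proof. intros [Hxy [t [H0 [H1 [H2 [H3 H4]]]]]]. lra. Qed.

Lemma no_passover n r th a b v : Hrel n r th a b -> Rec n r th v -> (v < n)%nat ->
  (a < n)%nat -> r a < r v < r b -> False.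
Proof.
  intros H R Hv Ha Hb. destruct (H v Hv) as [A _]. tauto.
  specialize (R a Ha ltac:(lra)). lra.
Qed.

Lemma chain n r th x y x' y' : (x < n)%nat -> (y < n)%nat -> (x' < n)%nat -> (y' < n)%nat ->
  Chord n r th x y -> Chord n r th x' y' ->
  (r x <= r x' /\ r y <= r y') \/ (r x' <= r x /\ r y' <= r y).
Proof.
  intros Hx Hy Hx' Hy' C C'.
  assert (G : forall x y x' y', (x < n)%nat -> (y < n)%nat -> (x' < n)%nat -> (y' < n)%nat ->
    Chord n r th x y -> Chord n r th x' y' ->
    (exists t t', t <= t' /\ 0 <= t /\ t <= th x /\ t + PI <= th y /\ th x < t + PI /\
      (forall k, (k < n)%nat -> k <> x -> k <> y ->
      (r k < r x -> th k < t) /\ (r k < r y -> th k < t + PI)) /\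
      0 <= t' /\ t' <= th x' /\ t' + PI <= th y' /\ th x' < t' + PI) ->
    r x <= r x' /\ r y <= r y').
  { clear. intros x y x' y' Hx Hy Hx' Hy' [Hr _] [Hr' _] [t [t' [Htt [A1 [A2 [A3 [A4 [A5 [B1 [B2 [B3 B4]]]]]]]]]]].
    split.
    - destruct (Rle_or_lt (r x) (r x')) as [|Hl]; auto. exfalso.
      assert (x' <> x) by (intro; subst; lra). assert (x' <> y) by (intro; subst; lra).
      destruct (A5 x' Hx') as [F _]; auto. specialize (F Hl). lra.
    - destruct (Rle_or_lt (r y) (r y')) as [|Hl]; auto. exfalso.
      assert (y' <> y) by (intro; subst; lra).
      destruct (Nat.eq_dec y' x) as [->|Hyx]. lra.
      destruct (A5 y' Hy') as [_ F]; auto. specialize (F Hl). lra. }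
  pose proof C as [_ [t [T1 [T2 [T3 [T4 T5]]]]]].
  pose proof C' as [_ [t' [T1' [T2' [T3' [T4' T5']]]]]].
  destruct (Rle_or_lt t t').
  - left. apply (G x y x' y'); auto. exists t, t'. repeat split; auto; try lra;
    intros; apply T5; auto.
  - right. apply (G x' y' x y); auto. exists t', t. repeat split; auto; try lra;
    intros; apply T5'; auto.
Qed.

Lemma exB n (f : nat -> R) : exists B, forall k, (k < n)%nat -> f k < B.
Proof.
  induction n as [|n [B HB]].
  - exists 0. intros; lia.
  - exists (Rmax B (f n + 1)). intros k Hk.
    destruct (Nat.eq_dec k n) as [->|].
    + eapply Rlt_le_trans; [|apply Rmax_r]. lra.
    + eapply Rlt_le_trans; [apply HB; lia|apply Rmax_l].
Qed.

Lemma exnear m (f : nat -> R) v : (forall k, (k < m)%nat -> f k <> v) ->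
  exists h, 0 < h /\ forall k, (k < m)%nat -> h <= Rabs (f k - v).
Proof.
  induction m as [|m IH]; intros H.
  - exists 1. split. lra. intros; lia.
  - destruct IH as [h [Hh Hk]]. intros; apply H; lia.
    assert (Hm : f m <> v) by (apply H; lia).
    exists (Rmin h (Rabs (f m - v))). split.
    + apply Rmin_pos; auto. apply Rabs_pos_lt. lra.
    + intros k Hk'. destruct (Nat.eq_dec k m) as [->|].
      * apply Rmin_r.
      * eapply Rle_trans; [apply Rmin_l|]. apply Hk; lia.
Qed.

Lemma exgap n (f : nat -> R) : (forall i j, (i < n)%nat -> (j < n)%nat -> i <> j -> f i <> f j) ->
  exists g, 0 < g /\ g <= 1 /\ forall i j, (i < n)%nat -> (j < n)%nat -> i <> j -> g <= Rabs (f i - f j).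
Proof.
  induction n as [|n IH]; intros H.
  - exists 1. repeat split; try lra. intros; lia.
  - destruct IH as [g [Hg [Hg1 Hgap]]]. intros; apply H; lia.
    destruct (exnear n f (f n)) as [h [Hh Hnear]]. intros; apply H; lia.
    exists (Rmin g h). repeat split.
    + apply Rmin_pos; auto.
    + eapply Rle_trans; [apply Rmin_l|auto].
    + intros i j Hi Hj Hij.
      destruct (Nat.eq_dec i n) as [->|]; destruct (Nat.eq_dec j n) as [->|].
      * lia.
      * rewrite Rabs_minus_sym. eapply Rle_trans; [apply Rmin_r|]. apply Hnear; lia.
      * eapply Rle_trans; [apply Rmin_r|]. apply Hnear; lia.
      * eapply Rle_trans; [apply Rmin_l|]. apply Hgap; lia.
Qed.


Definition T0 : R := 2 * PI + 1.
Definition sC (B : R) (r : nat -> R) (x y : nat) : R := 1 + 2 * B - (r x + r y).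
Definition eC (B g : R) (r : nat -> R) (x y : nat) : R := g * (r x + r y) / (4 * B).
Definition chordXY (B g : R) (r th : nat -> R) (x y : nat) : R -> R * R :=
  chord (r x) (th x) (r y) (th y) (eC B g r x y) (sC B r x y) B T0.
Definition gS (r th : nat -> R) (i j : nat) (t : R) : R * R :=
  (r i + t * (r j - r i), th i + t * (th j - th i)).
Definition gam (n : nat) (r th : nat -> R) (B g : R) (i j : nat) (t : R) : R * R :=
  if excluded_middle_informative (Hrel n r th i j) then gS r th i j t
  else if Rlt_dec (r i) (r j) then chordXY B g r th i j t else chordXY B g r th j i (1 - t).

Definition Good (n : nat) (r th : nat -> R) (B g : R) : Prop :=
  semi_arc_rep n r th /\ 1 <= B /\ (forall k, (k < n)%nat -> r k < B) /\
  0 < g /\ g <= 1 /\ (forall i j, (i < n)%nat -> (j < n)%nat -> i <> j -> g <= Rabs (r i - r j)).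

Lemma req n r th B g p q : Good n r th B g -> (p < n)%nat -> (q < n)%nat -> r p = r q -> p = q.
Proof.
  intros [Hrep _] Hp Hq E. destruct (Nat.eq_dec p q); auto.
  exfalso; apply (rinj n r th p q); auto.
Qed.

Lemma sep_of n r th B g p q : Good n r th B g -> (p < n)%nat -> (q < n)%nat ->
  sep g (r p) (th p) (r q) (th q).
Proof.
  intros G Hp Hq. destruct (Nat.eq_dec p q) as [->|Hpq].
  - left; auto.
  - right. destruct G as [_ [_ [_ [_ [_ Hg]]]]]. specialize (Hg p q Hp Hq Hpq).
    unfold Rabs in Hg. destruct (Rcase_abs (r p - r q)); lra.
Qed.

Lemma gap_of n r th B g p q : Good n r th B g -> (p < n)%nat -> (q < n)%nat -> r p < r q ->
  r p + g <= r q.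
Proof.
  intros G Hp Hq H. destruct (sep_of n r th B g p q G Hp Hq) as [[? ?]|[?|?]]; lra.
Qed.

Lemma vert_bounds n r th B g k : Good n r th B g -> (k < n)%nat ->
  0 < r k /\ r k < B /\ 0 < th k /\ th k < T0.
Proof.
  intros [[Hpos _] [_ [HB _]]] Hk. destruct (Hpos k Hk) as [? [? ?]].
  specialize (HB k Hk). unfold T0. lra.
Qed.

Lemma e_bounds n r th B g x y : Good n r th B g -> (x < n)%nat -> (y < n)%nat ->
  0 < eC B g r x y /\ eC B g r x y < g / 2 /\ 1 <= sC B r x y.
Proof.
  intros G Hx Hy. pose proof G as [_ [HB1 [HB [Hg [Hg1 _]]]]].
  destruct (vert_bounds n r th B g x G Hx) as [? [? _]].
  destruct (vert_bounds n r th B g y G Hy) as [? [? _]].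
  unfold eC, sC. split; [|split].
  - apply Rdiv_lt_0_compat; nra.
  - apply (Rmult_lt_reg_r (4 * B)); [lra|]. field_simplify; nra.
  - lra.
Qed.

Lemma CH_of n r th B g x y : Good n r th B g -> (x < n)%nat -> (y < n)%nat ->
  Chord n r th x y ->
  CH (r x) (th x) (r y) (th y) (eC B g r x y) (sC B r x y) B T0.
Proof.
  intros G Hx Hy C.
  destruct (e_bounds n r th B g x y G Hx Hy) as [E1 [E2 E3]].
  destruct (vert_bounds n r th B g x G Hx) as [? [? [? ?]]].
  destruct (vert_bounds n r th B g y G Hy) as [? [? [? ?]]].
  pose proof G as [_ [_ [_ [Hg [Hg1 _]]]]].
  assert (r x + g <= r y) by (apply (gap_of n r th B g); auto; destruct C; auto).
  assert (th x < th y) by (apply (chord_th n r th x y C)).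
  unfold CH. repeat split; lra.
Qed.


Lemma SS_disj n r th B g a b c d z : Good n r th B g ->
  (a < n)%nat -> (b < n)%nat -> (c < n)%nat -> (d < n)%nat ->
  r a < r b -> r c < r d -> Hrel n r th a b -> Hrel n r th c d -> ~ (a = c /\ b = d) ->
  Sin (r a) (th a) (r b) (th b) z -> Sin (r c) (th c) (r d) (th d) z -> False.
Proof.
  intros G Ha Hb Hc Hd Hab Hcd H1 H2 Hn.
  assert (Q : forall p q, (p < n)%nat -> (q < n)%nat -> r p = r q -> th p = th q).
  { intros p q Hp Hq E. rewrite (req n r th B g p q G Hp Hq E). auto. }
  apply seg_seg; auto.
  intros [E1 E2]. apply Hn. split; eapply req; eauto.
Qed.

Lemma SC_disj n r th B g a b x y z : Good n r th B g ->
  (a < n)%nat -> (b < n)%nat -> (x < n)%nat -> (y < n)%nat ->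
  r a < r b -> Hrel n r th a b -> Chord n r th x y ->
  Sin (r a) (th a) (r b) (th b) z ->
  Cin (r x) (th x) (r y) (th y) (eC B g r x y) (sC B r x y) B T0 z -> False.
Proof.
  intros G Ha Hb Hx Hy Hab H C.
  destruct (e_bounds n r th B g x y G Hx Hy) as [E1 [E2 E3]].
  destruct (vert_bounds n r th B g a G Ha) as [? [? [? ?]]].
  destruct (vert_bounds n r th B g b G Hb) as [? [? [? ?]]].
  pose proof G as [_ [_ [_ [Hg [Hg1 _]]]]].
  apply seg_chord with (g := g); auto; try lra.
  - apply (CH_of n r th B g x y); auto.
  - apply (sep_of n r th B g); auto.
  - apply (sep_of n r th B g); auto.
  - apply (sep_of n r th B g); auto.
  - apply (sep_of n r th B g); auto.
  - intro V. apply (no_passover n r th a b x H (chord_rx n r th x y C)); auto.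
  - intro V. apply (no_passover n r th a b y H (chord_ry n r th x y C)); auto.
Qed.

Lemma CC_disj_aux n r th B g x y x' y' z : Good n r th B g ->
  (x < n)%nat -> (y < n)%nat -> (x' < n)%nat -> (y' < n)%nat ->
  Chord n r th x y -> Chord n r th x' y' -> ~ (x = x' /\ y = y') ->
  r x <= r x' -> r y <= r y' ->
  Cin (r x) (th x) (r y) (th y) (eC B g r x y) (sC B r x y) B T0 z ->
  Cin (r x') (th x') (r y') (th y') (eC B g r x' y') (sC B r x' y') B T0 z -> False.
Proof.
  intros G Hx Hy Hx' Hy' C C' Hn Lx Ly.
  destruct (e_bounds n r th B g x' y' G Hx' Hy') as [E1 [E2 E3]].
  pose proof G as [_ [HB1 [_ [Hg [Hg1 _]]]]].
  assert (K : r x + r y < r x' + r y').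
  { destruct (Req_dec (r x) (r x')) as [Ex|Ex]; destruct (Req_dec (r y) (r y')) as [Ey|Ey]; try lra.
    exfalso. apply Hn. split; eapply req; eauto. }
  apply chord_chord with (g := g); auto.
  - apply (CH_of n r th B g x y); auto.
  - apply (CH_of n r th B g x' y'); auto.
  - unfold sC. lra.
  - unfold eC. unfold Rdiv. apply Rmult_lt_compat_r. apply Rinv_0_lt_compat; lra. nra.
  - lra.
  - apply (gap_of n r th B g); auto. destruct C; auto.
  - apply (gap_of n r th B g); auto. destruct C'; auto.
  - apply (sep_of n r th B g); auto.
  - apply (sep_of n r th B g); auto.
  - apply (sep_of n r th B g); auto.
Qed.

Lemma CC_disj n r th B g x y x' y' z : Good n r th B g ->
  (x < n)%nat -> (y < n)%nat -> (x' < n)%nat -> (y' < n)%nat ->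
  Chord n r th x y -> Chord n r th x' y' -> ~ (x = x' /\ y = y') ->
  Cin (r x) (th x) (r y) (th y) (eC B g r x y) (sC B r x y) B T0 z ->
  Cin (r x') (th x') (r y') (th y') (eC B g r x' y') (sC B r x' y') B T0 z -> False.
Proof.
  intros G Hx Hy Hx' Hy' C C' Hn Z Z'.
  destruct (chain n r th x y x' y' Hx Hy Hx' Hy' C C') as [[? ?]|[? ?]].
  - eapply (CC_disj_aux n r th B g x y x' y'); eauto.
  - eapply (CC_disj_aux n r th B g x' y' x y); eauto. intros [? ?]; apply Hn; split; auto.
Qed.


Lemma edge_int n r th B g i j t : Good n r th B g -> (i < n)%nat -> (j < n)%nat ->
  sav_adj n r th i j -> 0 < t < 1 ->
  (exists a b, (a < n)%nat /\ (b < n)%nat /\ ((a = i /\ b = j) \/ (a = j /\ b = i)) /\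
     r a < r b /\ Hrel n r th a b /\ Sin (r a) (th a) (r b) (th b) (gam n r th B g i j t)) \/
  (exists x y, (x < n)%nat /\ (y < n)%nat /\ ((x = i /\ y = j) \/ (x = j /\ y = i)) /\
     Chord n r th x y /\
     Cin (r x) (th x) (r y) (th y) (eC B g r x y) (sC B r x y) B T0 (gam n r th B g i j t)).
Proof.
  intros G Hi Hj A Ht. pose proof G as [Hrep _].
  assert (Hne : r i <> r j) by (apply (rinj n r th i j); auto; exact (proj1 A)).
  unfold gam. destruct (excluded_middle_informative (Hrel n r th i j)) as [H|H].
  - left. destruct (Rlt_or_le (r i) (r j)).
    + exists i, j. do 5 (split; [auto|]). exists t. split; auto.
    + exists j, i. do 3 (split; [auto|]). split; [lra|]. split; [apply Hrel_sym; auto|].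
      exists (1 - t). split. lra. unfold gS. f_equal; ring.
  - right. destruct (adj_cases n r th i j Hrep Hi Hj A) as [C|[C|C]]; [tauto| |].
    + exists i, j. destruct (Rlt_dec (r i) (r j)) as [_|N]; [|destruct C; lra].
      do 4 (split; [auto|]). apply chord_interior; auto. apply (CH_of n r th B g); auto.
    + exists j, i. destruct (Rlt_dec (r i) (r j)) as [N|_]; [destruct C; lra|].
      do 4 (split; [auto|]). apply chord_interior; [apply (CH_of n r th B g); auto|lra].
Qed.

Lemma cont_aff a b : continuity (fun t => a + t * b).
Proof.
  apply continuity_plus. apply continuity_const; intros ? ?; reflexivity.
  apply continuity_mult. apply derivable_continuous, derivable_id.
  apply continuity_const; intros ? ?; reflexivity.
Qed.

Lemma gam_props n r th B g i j : Good n r th B g -> (i < n)%nat -> (j < n)%nat ->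
  sav_adj n r th i j ->
  continuity (fun t => fst (gam n r th B g i j t)) /\
  continuity (fun t => snd (gam n r th B g i j t)) /\
  gam n r th B g i j 0 = (r i, th i) /\ gam n r th B g i j 1 = (r j, th j) /\
  (forall s t, 0 <= s <= 1 -> 0 <= t <= 1 -> gam n r th B g i j s = gam n r th B g i j t -> s = t).
Proof.
  intros G Hi Hj A. pose proof G as [Hrep _].
  assert (Hne : r i <> r j) by (apply (rinj n r th i j); auto; exact (proj1 A)).
  unfold gam. destruct (excluded_middle_informative (Hrel n r th i j)) as [H|H].
  - unfold gS; simpl. repeat split.
    + apply cont_aff.
    + apply cont_aff.
    + f_equal; ring.
    + f_equal; ring.
    + intros s t _ _ E. injection E; intros _ E1.
      apply (Rmult_eq_reg_r (r j - r i)); lra.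
  - destruct (adj_cases n r th i j Hrep Hi Hj A) as [C|[C|C]]; [tauto| |].
    + destruct (Rlt_dec (r i) (r j)) as [_|N]; [|destruct C; lra].
      unfold chordXY, chord, poly5; simpl. repeat split.
      * apply comp5_cont.
      * apply comp5_cont.
      * rewrite !comp5_0; auto.
      * rewrite !comp5_1; auto.
      * intros s t Hs Ht E. apply (chord_inj _ _ _ _ _ _ _ _ s t (CH_of n r th B g i j G Hi Hj C) Hs Ht).
        exact E.
    + destruct (Rlt_dec (r i) (r j)) as [N|_]; [destruct C; lra|].
      assert (Cc : forall a0 a1 a2 a3 a4 a5, continuity (fun t => comp5 a0 a1 a2 a3 a4 a5 (1 - t))).
      { intros. apply (continuity_comp (fun t => 1 - t) (comp5 a0 a1 a2 a3 a4 a5)); [|apply comp5_cont].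
        apply continuity_minus. apply continuity_const; intros ? ?; reflexivity.
        apply derivable_continuous, derivable_id. }
      unfold chordXY, chord, poly5; simpl. repeat split.
      * apply Cc.
      * apply Cc.
      * rewrite Rminus_0_r, !comp5_1; auto.
      * rewrite Rminus_diag, !comp5_0; auto.
      * intros s t Hs Ht E.
        assert (1 - s = 1 - t); [|lra].
        apply (chord_inj _ _ _ _ _ _ _ _ (1 - s) (1 - t) (CH_of n r th B g j i G Hj Hi C)); try lra.
        exact E.
Qed.


Lemma pairs_distinct (i j k l a b c d : nat) : (i < j)%nat -> (k < l)%nat -> (i, j) <> (k, l) ->
  ((a = i /\ b = j) \/ (a = j /\ b = i)) -> ((c = k /\ d = l) \/ (c = l /\ d = k)) ->
  ~ (a = c /\ b = d).
Proof.
  intros H1 H2 Hn Hab Hcd [E1 E2]. subst c d. apply Hn.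
  destruct Hab as [[-> ->]|[-> ->]]; destruct Hcd as [[E3 E4]|[E3 E4]]; subst;
  try reflexivity; lia.
Qed.

Theorem mainTheorem1 (n : nat) (r th : nat -> R) :
  semi_arc_rep n r th -> planar n (sav_adj n r th).
Proof.
  intros Hrep.
  destruct (exB n r) as [B0 HB0].
  destruct (exgap n r) as [g [Hg [Hg1 Hgap]]].
  { intros i j Hi Hj Hij. apply (rinj n r th i j); auto. }
  set (B := Rmax B0 1).
  assert (G : Good n r th B g).
  { unfold Good. split; [exact Hrep|]. split; [apply Rmax_r|].
    split; [intros k Hk; eapply Rlt_le_trans; [apply HB0; auto|apply Rmax_l]|].
    split; [exact Hg|]. split; [exact Hg1|exact Hgap]. }
  exists (fun k => (r k, th k)), (gam n r th B g). split.
  { intros i j Hi Hj E. injection E; intros _ E1. apply (req n r th B g); auto. }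
  intros i j Hij Hjn A.
  assert (Hin : (i < n)%nat) by lia.
  destruct (gam_props n r th B g i j G Hin Hjn A) as [C1 [C2 [E0 [E1 Inj]]]].
  split; [exact C1|]. split; [exact C2|]. split; [exact E0|]. split; [exact E1|].
  split; [exact Inj|]. split.
  - intros k t Hk Ht E.
    destruct (edge_int n r th B g i j t G Hin Hjn A Ht) as
      [[a [b [Ha [Hb [_ [Hab [H Z]]]]]]]|[x [y [Hx [Hy [_ [C Z]]]]]]]; rewrite E in Z.
    + apply (seg_vertex (r a) (th a) (r b) (th b) (r k) (th k)); auto.
      * intro Q. rewrite (req n r th B g k a G Hk Ha Q). auto.
      * intro Q. rewrite (req n r th B g k b G Hk Hb Q). auto.
    + destruct (e_bounds n r th B g x y G Hx Hy) as [? [? ?]].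
      destruct (vert_bounds n r th B g k G Hk) as [? [? [? ?]]].
      apply (chord_vertex (r x) (th x) (r y) (th y) (eC B g r x y) (sC B r x y) B T0 g (r k) (th k)); auto.
      * apply (CH_of n r th B g); auto.
      * lra.
      * apply (sep_of n r th B g); auto.
      * apply (sep_of n r th B g); auto.
  - intros k l Hkl Hln A' Hne s t Hs Ht E.
    assert (Hkn : (k < n)%nat) by lia.
    destruct (edge_int n r th B g i j s G Hin Hjn A Hs) as
      [[a [b [Ha [Hb [Pab [Hab [H Z]]]]]]]|[x [y [Hx [Hy [Pxy [C Z]]]]]]];
    destruct (edge_int n r th B g k l t G Hkn Hln A' Ht) as
      [[c [d [Hc [Hd [Pcd [Hcd [H' Z']]]]]]]|[x' [y' [Hx' [Hy' [Pxy' [C' Z']]]]]]];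
    rewrite E in Z.
    + apply (SS_disj n r th B g a b c d (gam n r th B g k l t) G); auto.
      apply (pairs_distinct i j k l); auto.
    + apply (SC_disj n r th B g a b x' y' (gam n r th B g k l t) G); auto.
    + apply (SC_disj n r th B g c d x y (gam n r th B g k l t) G); auto.
    + apply (CC_disj n r th B g x y x' y' (gam n r th B g k l t) G); auto.
      apply (pairs_distinct i j k l); auto.
Qed.
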